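(* Let $L$ be a label set containing $a$, and let $\mathcal{D}$ be the category of finite rooted $L$-labeled transition systems with root-preserving, label-preserving homomorphisms. Call a sieve $S$ on an object $G$ naive-sim-covering if for every finite rooted $L$-labeled tree $T$ admitting a homomorphism $T\to G$, some homomorphism $T\to G$ belongs to $S$. Then this covering predicate satisfies the maximality and transitivity axioms of a Grothendieck topology but not the stability (pullback) axiom. Explicitly: let $\mathrm{traceLTS}[a]$ have vertices $0$ (root) and $1$ with edge $0\xrightarrow{a}1$; let $\mathrm{fanLTS}[a,a]$ have vertices $0$ (root), $1$, $2$ with edges $0\xrightarrow{a}1$ and $0\xrightarrow{a}2$; let $f_R,f_L:\mathrm{traceLTS}[a]\to\mathrm{fanLTS}[a,a]$ send $1$ to $2$ and to $1$ respectively. The sieve $S$ on $\mathrm{fanLTS}[a,a]$ generated by $f_R$ is naive-sim-covering, while its pullback $f_L^*(S)$ on $\mathrm{traceLTS}[a]$ is not naive-sim-covering.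
   Context: A sieve on $G$ is a set of morphisms with codomain $G$ closed under precomposition; the pullback $f^*(S)$ along $f:H\to G$ is $\{g : f\circ g\in S\}$. The Grothendieck topology axioms: the maximal sieve covers (maximality); covering sieves are stable under pullback (stability); and if $S$ covers and $R$ is a sieve such that $f^*(R)$ covers for every $f\in S$ then $R$ covers (transitivity). *)

(* Defs.v *)
From mathcomp Require Import all_boot.
Set Implicit Arguments. Unset Strict Implicit. Unset Printing Implicit Defensive.

Section LTSDefs.
Variable L : eqType.

Record LTS := MkLTS {
  st : finType;
  root : st;
  edges : seq (st * L * st)
}.

Record Hom (G H : LTS) := MkHom {
  hfun :> st G -> st H;
  hroot : hfun (root G) = root H;
  hedge : all (fun e => (hfun e.1.1, e.1.2, hfun e.2) \in edges H) (edges G)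
}.

Lemma comp_root (G H K : LTS) (f : Hom H K) (g : Hom G H) :
  (f \o g) (root G) = root K.
Proof. by rewrite /= hroot hroot. Qed.

Lemma comp_edge (G H K : LTS) (f : Hom H K) (g : Hom G H) :
  all (fun e => ((f \o g) e.1.1, e.1.2, (f \o g) e.2) \in edges K) (edges G).
Proof.
apply/allP => e eG; have /allP := hedge g; move/(_ e eG) => eH.
by have /allP := hedge f; move/(_ _ eH).
Qed.

Definition comp (G H K : LTS) (f : Hom H K) (g : Hom G H) : Hom G K :=
  MkHom (comp_root f g) (comp_edge f g).

Definition sieve_pred (G : LTS) := forall H : LTS, Hom H G -> Prop.

Definition is_sieve (G : LTS) (S : sieve_pred G) : Prop :=
  forall (H : LTS) (f : Hom H G), S H f ->
    forall (K : LTS) (g : Hom K H), S K (comp f g).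

Definition maximal_sieve (G : LTS) : sieve_pred G := fun _ _ => True.

Definition pullback (G H : LTS) (f : Hom H G) (S : sieve_pred G) : sieve_pred H :=
  fun K g => S K (comp f g).

Definition gen_sieve (G H : LTS) (f : Hom H G) : sieve_pred G :=
  fun K g => exists h : Hom K H, g = comp f h.

Definition succ (T : LTS) : rel (st T) :=
  fun x y => has (fun e => (e.1.1 == x) && (e.2 == y)) (edges T).

Definition is_tree (T : LTS) : Prop :=
  [/\ forall x l, (x, l, root T) \notin edges T,
      forall y, y != root T ->
        exists x l, (x, l, y) \in edges T /\
          forall x' l', (x', l', y) \in edges T -> x' = x /\ l' = l
    & forall y, connect (@succ T) (root T) y].

Definition naive_sim_covering (G : LTS) (S : sieve_pred G) : Prop :=
  forall T : LTS, is_tree T -> inhabited (Hom T G) ->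
    exists h : Hom T G, S T h.

End LTSDefs.
Arguments maximal_sieve : clear implicits.

Section Examples.
Variables (L : eqType) (a : L).

Definition traceLTS : LTS L :=
  @MkLTS L 'I_2 ord0 [:: (ord0, a, ord_max)].

Definition fanLTS : LTS L :=
  @MkLTS L 'I_3 ord0
    [:: (ord0, a, (inord 1 : 'I_3)); (ord0, a, (inord 2 : 'I_3))].

Definition fR_fun (i : 'I_2) : 'I_3 := if i == ord0 then ord0 else inord 2.
Definition fL_fun (i : 'I_2) : 'I_3 := if i == ord0 then ord0 else inord 1.

Lemma fR_root : fR_fun ord0 = ord0. Proof. by []. Qed.
Lemma fL_root : fL_fun ord0 = ord0. Proof. by []. Qed.

Lemma fR_edge : all (fun e => (fR_fun e.1.1, e.1.2, fR_fun e.2) \in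
                     [:: ((ord0 : 'I_3), a, (inord 1 : 'I_3)); (ord0, a, inord 2)])
                  [:: ((ord0 : 'I_2), a, (ord_max : 'I_2))].
Proof. by rewrite /= !inE eqxx !orbT. Qed.

Lemma fL_edge : all (fun e => (fL_fun e.1.1, e.1.2, fL_fun e.2) \in
                     [:: ((ord0 : 'I_3), a, (inord 1 : 'I_3)); (ord0, a, inord 2)])
                  [:: ((ord0 : 'I_2), a, (ord_max : 'I_2))].
Proof. by rewrite /= !inE eqxx. Qed.

Definition fR : Hom traceLTS fanLTS := @MkHom L traceLTS fanLTS fR_fun fR_root fR_edge.
Definition fL : Hom traceLTS fanLTS := @MkHom L traceLTS fanLTS fL_fun fL_root fL_edge.

End Examples.

(* Main.v *)
Require Import Defs.
From mathcomp Require Import all_boot.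
From Stdlib Require Import FunctionalExtensionality.
Set Implicit Arguments. Unset Strict Implicit.

Lemma hom_ext (L : eqType) (G H : LTS L) (f g : Hom G H) :
  (forall x, f x = g x) -> f = g.
Proof.
case: f g => f1 r1 e1 [f2 r2 e2] /= E.
have E' := functional_extensionality f1 f2 E; subst f2.
by rewrite (eq_irrelevance r1 r2) (bool_irrelevance e1 e2).
Qed.

Lemma id_edge (L : eqType) (T : LTS L) :
  all (fun e => ((@id (st T)) e.1.1, e.1.2, (@id (st T)) e.2) \in edges T) (edges T).
Proof. by apply/allP => [[[x l] y]]. Qed.

Definition idHom (L : eqType) (T : LTS L) : Hom T T :=
  MkHom (H := T) (hfun := @id (st T)) erefl (id_edge T).

Section Ex.
Variables (L : eqType) (a : L).

Lemma gen_is_sieve : is_sieve (gen_sieve (fR a)).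
Proof.
move=> H f [h ->] K g; exists (Defs.comp h g); exact: hom_ext.
Qed.

Lemma fan_edge (T : LTS L) (h : Hom T (fanLTS a)) x l y :
  (x, l, y) \in edges T -> h x = ord0 /\ h y != ord0.
Proof.
move=> xy; have /allP/(_ _ xy) := hedge h.
rewrite /= !inE !xpair_eqE => /orP [/andP[/andP[/eqP -> _] /eqP ->]|
   /andP[/andP[/eqP -> _] /eqP ->]]; split => //; apply/eqP; move/(congr1 val);
  by rewrite /= inordK.
Qed.

Definition kfun (T : LTS L) (h : Hom T (fanLTS a)) (x : st T) : st (traceLTS a) :=
  if h x == ord0 then (ord0 : 'I_2) else ord_max.

Lemma k_root (T : LTS L) (h : Hom T (fanLTS a)) : kfun h (Defs.root T) = Defs.root (traceLTS a).
Proof. by rewrite /kfun hroot. Qed.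

Lemma k_edge (T : LTS L) (h : Hom T (fanLTS a)) :
  all (fun e => (kfun h e.1.1, e.1.2, kfun h e.2) \in edges (traceLTS a)) (edges T).
Proof.
apply/allP => [[[x l] y]] xy /=.
have [hx hy] := fan_edge h xy.
have /allP/(_ _ xy) := hedge h.
rewrite /= !inE !xpair_eqE /kfun hx eqxx (negbTE hy) /= andbT.
by case/orP => /andP[].
Qed.

Lemma cov_gen : naive_sim_covering (gen_sieve (fR a)).
Proof.
move=> T _ [h].
exists (Defs.comp (fR a) (MkHom (k_root h) (k_edge h))).
by exists (MkHom (k_root h) (k_edge h)).
Qed.

Lemma trace_tree : is_tree (traceLTS a).
Proof.
split.
- by move=> x l; rewrite /= !inE !xpair_eqE andbF.
- move=> y ny; exists ord0, a; split.
    have -> : y = ord_max.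
      by apply/val_inj; case: y ny => [[|[|n]] //=].
    by rewrite inE.
  by move=> x' l'; rewrite /= !inE !xpair_eqE => /andP[/andP[/eqP -> /eqP ->] _].
- move=> y; case: y => [[|[|n]] //] Hy.
    have -> : Ordinal Hy = Defs.root (traceLTS a) by apply/val_inj.
    exact: connect0.
  by apply: connect1.
Qed.

Lemma trace_edge (h : Hom (traceLTS a) (traceLTS a)) : h ord_max = ord_max.
Proof.
have /allP/(_ (ord0, a, ord_max)) := hedge h.
by rewrite /= !inE eqxx !xpair_eqE => /(_ isT) /andP[_ /eqP].
Qed.

Lemma not_cov : ~ naive_sim_covering (pullback (fL a) (gen_sieve (fR a))).
Proof.
move=> C.
have [h [k E]] := C _ trace_tree (inhabits (idHom _)).
have := congr1 (fun f : Hom (traceLTS a) (fanLTS a) => hfun f (ord_max : 'I_2)) E.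
rewrite /= trace_edge trace_edge /fL_fun /fR_fun /=.
by move/(congr1 val); rewrite /= !inordK.
Qed.

End Ex.

Theorem mainTheorem17 (L : eqType) (a : L) :
  (* maximality *)
  (forall G : LTS L, naive_sim_covering (maximal_sieve L G)) /\
  (* transitivity *)
  (forall (G : LTS L) (S R : sieve_pred G),
     is_sieve S -> is_sieve R ->
     naive_sim_covering S ->
     (forall (H : LTS L) (f : Hom H G), S H f ->
        naive_sim_covering (pullback f R)) ->
     naive_sim_covering R) /\
  (* failure of stability *)
  ~ (forall (G H : LTS L) (f : Hom H G) (S : sieve_pred G),
       is_sieve S -> naive_sim_covering S -> naive_sim_covering (pullback f S)) /\
  (* explicit counterexample *)
  is_sieve (gen_sieve (fR a)) /\
  naive_sim_covering (gen_sieve (fR a)) /\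
  ~ naive_sim_covering (pullback (fL a) (gen_sieve (fR a))).
Proof.
split; first by move=> G T _ [h]; exists h.
split.
  move=> G S R _ _ CS CR T tT inh.
  have [h Sh] := CS T tT inh.
  have [k Rk] := CR _ _ Sh T tT (inhabits (idHom T)).
  by exists (Defs.comp h k).
split.
  move=> St; exact: (@not_cov L a (St _ _ (fL a) _ (@gen_is_sieve L a) (@cov_gen L a))).
split; first exact: gen_is_sieve.
split; [exact: cov_gen | exact: not_cov].
Qed.
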